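(* Let $2\le d_1\le d_2\le d_3\le d_4$, let $2\le s\le d_1$, and let $|\varphi\rangle=\sum_{i,j,k,r}a_{ijkr}|ijkr\rangle$ be a normalized pure state in $H_1\otimes H_2\otimes H_3\otimes H_4$ with $\dim H_i=d_i$. Then $$C^2(|\varphi\rangle)\ \ge\ \frac{1}{\binom{d_1-2}{s-2}\binom{d_2-2}{s-2}\binom{d_3-1}{s-1}\binom{d_4-1}{s-1}}\sum C^2(|\varphi\rangle_{s\otimes s\otimes s\otimes s}),$$ where the sum runs over all pure substates $|\varphi\rangle_{s\otimes s\otimes s\otimes s}=(G_1\otimes G_2\otimes G_3\otimes G_4)|\varphi\rangle$, $G_i=\sum_{x\in S_i}|x\rangle\langle x|$, over all choices of subsets $S_i\subseteq\{1,\dots,d_i\}$ with $|S_i|=s$.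
   Context: $C$ denotes the four-partite concurrence of a (not necessarily normalized) vector $|\psi\rangle$ with $\sigma=|\psi\rangle\langle\psi|$: $C(|\psi\rangle)=2^{-1}\sqrt{14(\mathrm{tr}\,\sigma)^2-\sum_\alpha\mathrm{tr}(\sigma_\alpha^2)}$, $\alpha$ running over the 14 nonempty proper subsets of $\{1,2,3,4\}$ and $\sigma_\alpha=\mathrm{tr}_{\bar\alpha}\sigma$. The computational bases of $H_i\cong\mathbb{C}^{d_i}$ are fixed. *)

(* Defs.v *)
From HB Require Import structures.
From mathcomp Require Import all_boot all_order all_algebra.
Set Implicit Arguments. Unset Strict Implicit. Unset Printing Implicit Defensive.
Import Order.TTheory GRing.Theory Num.Theory.
Local Open Scope ring_scope.

(* Multi-index of H1 (x) H2 (x) H3 (x) H4, computational basis, 0-based. *)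
Definition idx4 (d1 d2 d3 d4 : nat) : finType :=
  ('I_d1 * 'I_d2 * 'I_d3 * 'I_d4)%type.

Section Conc.
Variables (C : numClosedFieldType) (d1 d2 d3 d4 : nat).
Local Notation I := (idx4 d1 d2 d3 d4).

(* Party numbering: 0,1,2,3 correspond to H1,H2,H3,H4. *)
Definition p1 (p : I) : 'I_d1 := p.1.1.1.
Definition p2 (p : I) : 'I_d2 := p.1.1.2.
Definition p3 (p : I) : 'I_d3 := p.1.2.
Definition p4 (p : I) : 'I_d4 := p.2.

Definition mix (al : {set 'I_4}) (p q : I) : I :=
  (if (0 : 'I_4) \in al then p1 p else p1 q,
   if (1 : 'I_4) \in al then p2 p else p2 q,
   if (2 : 'I_4) \in al then p3 p else p3 q,
   if (3 : 'I_4) \in al then p4 p else p4 q).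

(* tr(sigma) for sigma = |psi><psi|, psi = sum_p a p |p> *)
Definition tr_sigma (a : I -> C) : C := \sum_(p : I) a p * (a p)^*.

(* tr(sigma_al^2), sigma_al = tr_{complement of al} sigma.  Writing p = (u,w),
   q = (v,w') with u,v the al-components and w,w' the others:
   (sigma_al)_{u v} = sum_w a(u,w) conj a(v,w), hence
   tr(sigma_al^2) = sum_{u,v,w,w'} a(u,w) conj a(v,w) a(v,w') conj a(u,w')
                  = sum_{p,q} a p * conj a (mix q p) * a q * conj a (mix p q). *)
Definition tr_red_sq (al : {set 'I_4}) (a : I -> C) : C :=
  \sum_(p : I) \sum_(q : I)
     a p * (a (mix al q p))^* * a q * (a (mix al p q))^*.

Definition conc4 (a : I -> C) : C :=
  2^-1 * sqrtC (14%:R * tr_sigma a ^+ 2 -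
    \sum_(al : {set 'I_4} | (al != set0) && (al != setT)) tr_red_sq al a).

Definition substate (S1 : {set 'I_d1}) (S2 : {set 'I_d2})
  (S3 : {set 'I_d3}) (S4 : {set 'I_d4}) (a : I -> C) : I -> C :=
  fun p => if [&& p1 p \in S1, p2 p \in S2, p3 p \in S3 & p4 p \in S4]
           then a p else 0.
End Conc.

(* Main.v *)
Require Import Defs.
From mathcomp Require Import all_boot all_order all_algebra.
From mathcomp Require Import ring lra zify.
Set Implicit Arguments. Unset Strict Implicit. Unset Printing Implicit Defensive.
Import Order.TTheory GRing.Theory Num.Theory.
Local Open Scope ring_scope.

Lemma count_sup (T : finType) (D : {set T}) k : (#|D| <= k)%N ->
  #|[set A : {set T} | D \subset A & #|A| == k]| = 'C(#|T| - #|D|, k - #|D|).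
Proof.
move=> hD.
have -> : (#|T| - #|D| = #|~: D|)%N by rewrite -(cardsC D) addKn.
rewrite -cards_draws.
have inj : {in [set B : {set T} | B \subset ~:D & #|B| == (k - #|D|)%N] &,
            injective (fun B => B :|: D)}.
  move=> B1 B2; rewrite !inE => /andP[h1 _] /andP[h2 _] e.
  have K (B : {set T}) : B \subset ~: D -> (B :|: D) :\: D = B.
    by move=> hB; rewrite setDUl setDv setU0; apply/setDidPl; rewrite disjoints_subset.
  by rewrite -(K _ h1) e K.
rewrite -(card_in_imset inj); apply: eq_card => A.
apply/idP/idP.
- rewrite inE => /andP[DA /eqP kA].
  apply/imsetP; exists (A :\: D).
    rewrite inE; apply/andP; split; first by rewrite -disjoints_subset disjoint_sym disjoints_subset setCD subsetUr.
    by rewrite cardsD (setIidPr DA) kA.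
  by rewrite -{1}(setID A D) (setIidPr DA) setUC.
- case/imsetP => B; rewrite inE => /andP[hB /eqP kB] ->.
  rewrite inE subsetUr /= cardsU kB.
  have -> : B :&: D = set0 by apply/eqP; rewrite setI_eq0 disjoints_subset.
  by rewrite cards0 subn0 subnK.
Qed.

Lemma pair_count d s (x y : 'I_d) : ((x != y).+1 <= s)%N ->
  (\sum_(S : {set 'I_d} | #|S| == s) ((x \in S) && (y \in S) : nat))%N
   = 'C(d - (x != y).+1, s - (x != y).+1).
Proof.
move=> hs.
have -> : (\sum_(S : {set 'I_d} | #|S| == s) ((x \in S) && (y \in S) : nat))%N
   = #|[set S : {set 'I_d} | [set x; y] \subset S & #|S| == s]|.
  rewrite -sum1_card big_mkcond /= [RHS]big_mkcond /=; apply: eq_bigr => S _.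
  rewrite inE subUset !sub1set.
  by case: (#|S| == s); case: (x \in S); case: (y \in S).
by rewrite count_sup cards2 ?card_ord.
Qed.

Lemma binid s d : (2 <= s)%N -> (s <= d)%N ->
  ((s - 1) * 'C(d - 1, s - 1) = (d - 1) * 'C(d - 2, s - 2))%N.
Proof.
move=> h1 h2.
have := mul_bin_diag (d - 1) (s - 2).
have -> : ((d - 1).-1 = d - 2)%N by lia.
have -> : ((s - 2).+1 = s - 1)%N by lia.
by move=> ->.
Qed.

Lemma cross s d d' : (2 <= s)%N -> (s <= d)%N -> (d <= d')%N ->
  ('C(d - 1, s - 1) * 'C(d' - 2, s - 2) <= 'C(d - 2, s - 2) * 'C(d' - 1, s - 1))%N.
Proof.
move=> h1 h2 h3.
have hs : (0 < s - 1)%N by lia.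
rewrite -(leq_pmul2l hs) mulnA binid // mulnCA binid; last by lia.
rewrite mulnA. idtac.
rewrite [X in (_ <= X * _)%N]mulnC leq_mul2r leq_mul2r leq_sub2r ?orbT //.
by [].
Qed.

Lemma AleB s d : (2 <= s)%N -> (s <= d)%N -> ('C(d - 2, s - 2) <= 'C(d - 1, s - 1))%N.
Proof.
move=> h1 h2.
have hs : (0 < s - 1)%N by lia.
rewrite -(leq_pmul2l hs) binid // leq_mul2r leq_sub2r ?orbT //.
Qed.

Lemma abs_bound (A1 A2 A3 A4 B1 B2 B3 B4 : nat) (e1 e2 e3 e4 : bool) :
  (A1 <= B1)%N -> (A2 <= B2)%N -> (A3 <= B3)%N -> (A4 <= B4)%N ->
  (B2 * A3 <= A2 * B3)%N -> (B2 * A4 <= A2 * B4)%N ->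
  (B1 * A3 <= A1 * B3)%N -> (B1 * A4 <= A1 * B4)%N ->
  (2 <= e1 + e2 + e3 + e4)%N ->
  ((if e1 then A1 else B1) * (if e2 then A2 else B2) * (if e3 then A3 else B3)
    * (if e4 then A4 else B4) <= A1 * A2 * B3 * B4)%N.
Proof.
move=> h1 h2 h3 h4 c23 c24 c13 c14.
case: e1; case: e2; case: e3; case: e4 => //= _.
- by apply: leq_mul => //; apply: leq_mul.
- by apply: leq_mul => //; apply: leq_mul.
- by apply: leq_mul.
- have -> : (A1 * B2 * A3 * A4 = A1 * (B2 * A3) * A4)%N by ring.
  have -> : (A1 * A2 * B3 * B4 = A1 * (A2 * B3) * B4)%N by ring.
  by apply: leq_mul => //; apply: leq_mul.
- have -> : (A1 * B2 * A3 * B4 = A1 * (B2 * A3) * B4)%N by ring.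
  have -> : (A1 * A2 * B3 * B4 = A1 * (A2 * B3) * B4)%N by ring.
  by apply: leq_mul => //; apply: leq_mul.
- have -> : (A1 * B2 * B3 * A4 = (A1 * B3) * (B2 * A4))%N by ring.
  have -> : (A1 * A2 * B3 * B4 = (A1 * B3) * (A2 * B4))%N by ring.
  by apply: leq_mul.
- have -> : (B1 * A2 * A3 * A4 = A2 * (B1 * A3) * A4)%N by ring.
  have -> : (A1 * A2 * B3 * B4 = A2 * (A1 * B3) * B4)%N by ring.
  by apply: leq_mul => //; apply: leq_mul.
- have -> : (B1 * A2 * A3 * B4 = A2 * (B1 * A3) * B4)%N by ring.
  have -> : (A1 * A2 * B3 * B4 = A2 * (A1 * B3) * B4)%N by ring.
  by apply: leq_mul => //; apply: leq_mul.
- have -> : (B1 * A2 * B3 * A4 = A2 * B3 * (B1 * A4))%N by ring.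
  have -> : (A1 * A2 * B3 * B4 = A2 * B3 * (A1 * B4))%N by ring.
  by apply: leq_mul.
- have -> : (B1 * B2 * A3 * A4 = (B1 * A3) * (B2 * A4))%N by ring.
  have -> : (A1 * A2 * B3 * B4 = (A1 * B3) * (A2 * B4))%N by ring.
  by apply: leq_mul.
Qed.

Lemma Nbound s d1 d2 d3 d4 (e1 e2 e3 e4 : bool) :
  (2 <= s)%N -> (s <= d1)%N -> (d1 <= d2)%N -> (d2 <= d3)%N -> (d3 <= d4)%N ->
  (2 <= e1 + e2 + e3 + e4)%N ->
  ('C(d1 - e1.+1, s - e1.+1) * 'C(d2 - e2.+1, s - e2.+1) * 'C(d3 - e3.+1, s - e3.+1)
    * 'C(d4 - e4.+1, s - e4.+1) <=
   'C(d1 - 2, s - 2) * 'C(d2 - 2, s - 2) * 'C(d3 - 1, s - 1) * 'C(d4 - 1, s - 1))%N.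
Proof.
move=> hs h1 h12 h23 h34 he.
have E (e : bool) d : 'C(d - e.+1, s - e.+1) = if e then 'C(d - 2, s - 2) else 'C(d - 1, s - 1).
  by case: e.
rewrite !E; apply: abs_bound => //.
- apply: AleB => //.
- apply: AleB => //; lia.
- apply: AleB => //; lia.
- apply: AleB => //; lia.
- apply: cross => //; lia.
- apply: cross => //; lia.
- apply: cross => //; lia.
- apply: cross => //; lia.
Qed.

Definition T4 (C : numClosedFieldType) d1 d2 d3 d4 (al : {set 'I_4})
  (b : idx4 d1 d2 d3 d4 -> C) (p q : idx4 d1 d2 d3 d4) : C :=
  `|b p * b q - b (mix al q p) * b (mix al p q)| ^+ 2.

Lemma mixK d1 d2 d3 d4 (al : {set 'I_4}) (p q : idx4 d1 d2 d3 d4) :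
  mix al (mix al p q) (mix al q p) = p.
Proof.
case: p q => [[[? ?] ?] ?] [[[? ?] ?] ?]; rewrite /mix /p1 /p2 /p3 /p4 /=.
by case: ((0:'I_4) \in al); case: ((1:'I_4) \in al); case: ((2:'I_4) \in al);
   case: ((3:'I_4) \in al).
Qed.

Lemma reidx (C : numClosedFieldType) d1 d2 d3 d4 (al : {set 'I_4})
  (F : idx4 d1 d2 d3 d4 -> idx4 d1 d2 d3 d4 -> C) :
  \sum_p \sum_q F p q = \sum_p \sum_q F (mix al q p) (mix al p q).
Proof.
rewrite !pair_big /=.
have inj : injective (fun u : idx4 d1 d2 d3 d4 * idx4 d1 d2 d3 d4 =>
                       (mix al u.2 u.1, mix al u.1 u.2)).
  apply: (can_inj (g := fun u : idx4 d1 d2 d3 d4 * idx4 d1 d2 d3 d4 =>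
                       (mix al u.2 u.1, mix al u.1 u.2))).
  by move=> [x y] /=; rewrite !mixK.
by rewrite (reindex_inj inj).
Qed.

Lemma sumT4 (C : numClosedFieldType) d1 d2 d3 d4 (al : {set 'I_4})
  (b : idx4 d1 d2 d3 d4 -> C) :
  \sum_p \sum_q T4 al b p q =
  tr_sigma b ^+ 2 - tr_red_sq al b - tr_red_sq al b + tr_sigma b ^+ 2.
Proof.
have E p q : T4 al b p q =
   (b p * b q * (b p)^* * (b q)^*)
 - (b p * (b (mix al q p))^* * b q * (b (mix al p q))^*)
 - (b (mix al q p) * (b p)^* * b (mix al p q) * (b q)^*)
 + (b (mix al q p) * b (mix al p q) * (b (mix al q p))^* * (b (mix al p q))^*).
  by rewrite /T4 normCK rmorphB !rmorphM /=; ring.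
under eq_bigr do under eq_bigr do rewrite E.
under eq_bigr do rewrite big_split /= !sumrB.
rewrite big_split /= !sumrB.
have T1 : \sum_p \sum_q (b p * b q * (b p)^* * (b q)^*) = tr_sigma b ^+ 2.
  rewrite /tr_sigma expr2 big_distrl; apply: eq_bigr => p _.
  rewrite big_distrr; apply: eq_bigr => q _ /=; ring.
have T4' : \sum_p \sum_q (b (mix al q p) * b (mix al p q) * (b (mix al q p))^* * (b (mix al p q))^*)
   = tr_sigma b ^+ 2.
  by rewrite -T1 [RHS](reidx al).
have T3 : \sum_p \sum_q (b (mix al q p) * (b p)^* * b (mix al p q) * (b q)^*)
   = tr_red_sq al b.
  rewrite /tr_red_sq [RHS](reidx al); apply: eq_bigr => p _; apply: eq_bigr => q _.
  by rewrite !mixK.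
by rewrite T1 T4' T3.
Qed.

Lemma card14 : #|[pred al : {set 'I_4} | (al != set0) && (al != setT)]| = 14%N.
Proof.
have := cardC (mem [set (set0 : {set 'I_4}); setT]).
have hT : #|{set 'I_4}| = 16%N by rewrite -cardsT -powersetT card_powerset cardsT card_ord.
rewrite cards2 hT.
have -> : (set0 : {set 'I_4}) != setT.
  by apply/eqP => /setP/(_ ord0); rewrite !inE.
move=> h.
move: h; set X := #|_| => h.
have <- : X = 14%N by lia.
rewrite /X; apply: eq_card => al; rewrite !inE /=.
by rewrite negb_or.
Qed.

Lemma conc4_sq (C : numClosedFieldType) d1 d2 d3 d4 (b : idx4 d1 d2 d3 d4 -> C) :
  conc4 b ^+ 2 = 8^-1 * \sum_(al : {set 'I_4} | (al != set0) && (al != setT))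
                           \sum_p \sum_q T4 al b p q.
Proof.
rewrite /conc4 exprMn sqrtCK.
rewrite [in RHS](eq_bigr _ (fun al _ => sumT4 al b)).
rewrite big_split /= !sumrB sumr_const card14.
rewrite -mulr_natl.
set t := tr_sigma b. set r := \sum_(_ | _) _.
have h2 : (2 : C) != 0 by rewrite pnatr_eq0.
have h8 : (8 : C) != 0 by rewrite pnatr_eq0.
by field.
Qed.

Definition inB d1 d2 d3 d4 (S1 : {set 'I_d1}) (S2 : {set 'I_d2})
  (S3 : {set 'I_d3}) (S4 : {set 'I_d4}) (x : idx4 d1 d2 d3 d4) : bool :=
  [&& p1 x \in S1, p2 x \in S2, p3 x \in S3 & p4 x \in S4].

Lemma inB_mix d1 d2 d3 d4 (S1 : {set 'I_d1}) (S2 : {set 'I_d2})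
  (S3 : {set 'I_d3}) (S4 : {set 'I_d4}) al (x y : idx4 d1 d2 d3 d4) :
  inB S1 S2 S3 S4 x -> inB S1 S2 S3 S4 y -> inB S1 S2 S3 S4 (mix al x y).
Proof.
case: x y => [[[x1 x2] x3] x4] [[[y1 y2] y3] y4].
rewrite /inB /mix /p1 /p2 /p3 /p4 /= => /and4P[? ? ? ?] /and4P[? ? ? ?].
by case: ((0:'I_4) \in al); case: ((1:'I_4) \in al); case: ((2:'I_4) \in al);
   case: ((3:'I_4) \in al); apply/and4P.
Qed.

Lemma T4_sub (C : numClosedFieldType) d1 d2 d3 d4 (S1 : {set 'I_d1}) (S2 : {set 'I_d2})
  (S3 : {set 'I_d3}) (S4 : {set 'I_d4}) al (a : idx4 d1 d2 d3 d4 -> C) p q :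
  T4 al (substate S1 S2 S3 S4 a) p q =
  T4 al a p q * ((inB S1 S2 S3 S4 p && inB S1 S2 S3 S4 q) : nat)%:R.
Proof.
have sE x : substate S1 S2 S3 S4 a x = if inB S1 S2 S3 S4 x then a x else 0 by [].
rewrite /T4 !sE.
case hp: (inB S1 S2 S3 S4 p); case hq: (inB S1 S2 S3 S4 q) => /=.
- by rewrite !inB_mix // mulr1.
all: rewrite ?mulr0 ?mul0r.
all: case h1: (inB S1 S2 S3 S4 (mix al q p)); case h2: (inB S1 S2 S3 S4 (mix al p q));
    rewrite ?mulr0 ?mul0r ?subr0 ?sub0r ?normr0 ?normrN ?expr0n //.
all: first [ by have := inB_mix al h2 h1; rewrite mixK hp |
             by have := inB_mix al h1 h2; rewrite mixK hq ].
Qed.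

Lemma if_eqA (T : eqType) (m : bool) (x y : T) : ~~ (m && (x != y)) -> (if m then y else x) = x.
Proof. by case: m => //= /negbNE/eqP. Qed.
Lemma if_eqB (T : eqType) (m : bool) (x y : T) : ~~ (m && (x != y)) -> (if m then x else y) = y.
Proof. by case: m => //= /negbNE/eqP. Qed.
Lemma if_eqC (T : eqType) (m : bool) (x y : T) : ~~ (~~ m && (x != y)) -> (if m then y else x) = y.
Proof. by case: m => //= /negbNE/eqP. Qed.
Lemma if_eqD (T : eqType) (m : bool) (x y : T) : ~~ (~~ m && (x != y)) -> (if m then x else y) = x.
Proof. by case: m => //= /negbNE/eqP. Qed.

Lemma T4_nz (C : numClosedFieldType) d1 d2 d3 d4 al (a : idx4 d1 d2 d3 d4 -> C) p q :
  T4 al a p q != 0 ->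
  (2 <= (p1 p != p1 q) + (p2 p != p2 q) + (p3 p != p3 q) + (p4 p != p4 q))%N.
Proof.
move=> hT.
have key : forall m1 m2 m3 m4 e1 e2 e3 e4 : bool,
  [|| m1 && e1, m2 && e2, m3 && e3 | m4 && e4] ->
  [|| ~~ m1 && e1, ~~ m2 && e2, ~~ m3 && e3 | ~~ m4 && e4] ->
  (2 <= e1 + e2 + e3 + e4)%N.
  by do 8 case.
apply: (key ((0:'I_4) \in al) ((1:'I_4) \in al) ((2:'I_4) \in al) ((3:'I_4) \in al)).
- apply/negPn/negP => hA; move: hT; rewrite /T4.
  have [-> ->] : mix al q p = p /\ mix al p q = q.
    move: hA; case: p q => [[[x1 x2] x3] x4] [[[y1 y2] y3] y4].
    rewrite /mix /p1 /p2 /p3 /p4 /= !negb_or => /and4P[h1 h2 h3 h4].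
    by rewrite (if_eqA h1) (if_eqA h2) (if_eqA h3) (if_eqA h4)
      (if_eqB h1) (if_eqB h2) (if_eqB h3) (if_eqB h4).
  by rewrite subrr normr0 expr0n eqxx.
- apply/negPn/negP => hA; move: hT; rewrite /T4.
  have [-> ->] : mix al q p = q /\ mix al p q = p.
    move: hA; case: p q => [[[x1 x2] x3] x4] [[[y1 y2] y3] y4].
    rewrite /mix /p1 /p2 /p3 /p4 /= !negb_or => /and4P[h1 h2 h3 h4].
    by rewrite (if_eqC h1) (if_eqC h2) (if_eqC h3) (if_eqC h4)
      (if_eqD h1) (if_eqD h2) (if_eqD h3) (if_eqD h4).
  by rewrite mulrC subrr normr0 expr0n eqxx.
Qed.


Lemma xch4 (C : numClosedFieldType) d1 d2 d3 d4 s (J : finType) (P : pred J)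
  (h : J -> {set 'I_d1} -> {set 'I_d2} -> {set 'I_d3} -> {set 'I_d4} -> C) :
  \sum_(S1 : {set 'I_d1} | #|S1| == s) \sum_(S2 : {set 'I_d2} | #|S2| == s)
  \sum_(S3 : {set 'I_d3} | #|S3| == s) \sum_(S4 : {set 'I_d4} | #|S4| == s)
  \sum_(j | P j) h j S1 S2 S3 S4 =
  \sum_(j | P j) \sum_(S1 : {set 'I_d1} | #|S1| == s) \sum_(S2 : {set 'I_d2} | #|S2| == s)
  \sum_(S3 : {set 'I_d3} | #|S3| == s) \sum_(S4 : {set 'I_d4} | #|S4| == s)
  h j S1 S2 S3 S4.
Proof.
under eq_bigr do under eq_bigr do under eq_bigr do rewrite exchange_big.
under eq_bigr do under eq_bigr do rewrite exchange_big.
under eq_bigr do rewrite exchange_big.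
by rewrite exchange_big.
Qed.

Lemma prod4 (C : numClosedFieldType) d1 d2 d3 d4 s (k : C)
  (f1 : {set 'I_d1} -> C) (f2 : {set 'I_d2} -> C) (f3 : {set 'I_d3} -> C) (f4 : {set 'I_d4} -> C) :
  \sum_(S1 : {set 'I_d1} | #|S1| == s) \sum_(S2 : {set 'I_d2} | #|S2| == s)
  \sum_(S3 : {set 'I_d3} | #|S3| == s) \sum_(S4 : {set 'I_d4} | #|S4| == s)
  k * f1 S1 * f2 S2 * f3 S3 * f4 S4 =
  k * (\sum_(S1 : {set 'I_d1} | #|S1| == s) f1 S1) * (\sum_(S2 : {set 'I_d2} | #|S2| == s) f2 S2)
    * (\sum_(S3 : {set 'I_d3} | #|S3| == s) f3 S3) * (\sum_(S4 : {set 'I_d4} | #|S4| == s) f4 S4).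
Proof.
rewrite [k * _]mulr_sumr !big_distrl /=; apply: eq_bigr => S1 _.
rewrite [k * f1 S1 * _]mulr_sumr !big_distrl /=; apply: eq_bigr => S2 _.
rewrite [k * f1 S1 * f2 S2 * _]mulr_sumr !big_distrl /=; apply: eq_bigr => S3 _.
by rewrite [k * f1 S1 * f2 S2 * f3 S3 * _]mulr_sumr.
Qed.


Lemma conc_sub_pt (C : numClosedFieldType) d1 d2 d3 d4 (S1 : {set 'I_d1}) (S2 : {set 'I_d2})
  (S3 : {set 'I_d3}) (S4 : {set 'I_d4}) (a : idx4 d1 d2 d3 d4 -> C) :
  conc4 (substate S1 S2 S3 S4 a) ^+ 2 =
  \sum_(al : {set 'I_4} | (al != set0) && (al != setT)) \sum_p \sum_q
    (8^-1 * T4 al a p q) * ((p1 p \in S1) && (p1 q \in S1) : nat)%:R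
      * ((p2 p \in S2) && (p2 q \in S2) : nat)%:R
      * ((p3 p \in S3) && (p3 q \in S3) : nat)%:R
      * ((p4 p \in S4) && (p4 q \in S4) : nat)%:R.
Proof.
rewrite conc4_sq mulr_sumr; apply: eq_bigr => al _.
rewrite mulr_sumr; apply: eq_bigr => p _.
rewrite mulr_sumr; apply: eq_bigr => q _.
rewrite T4_sub -!mulrA -!natrM !mulrA; congr (_ * _%:R).
rewrite /inB.
by case: (p1 p \in S1); case: (p1 q \in S1); case: (p2 p \in S2); case: (p2 q \in S2);
   case: (p3 p \in S3); case: (p3 q \in S3); case: (p4 p \in S4); case: (p4 q \in S4).
Qed.

Theorem mainTheorem6 (C : numClosedFieldType) (d1 d2 d3 d4 s : nat)
  (a : idx4 d1 d2 d3 d4 -> C) :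
  (2 <= d1)%N -> (d1 <= d2)%N -> (d2 <= d3)%N -> (d3 <= d4)%N ->
  (2 <= s)%N -> (s <= d1)%N ->
  tr_sigma a = 1 ->
  ('C(d1 - 2, s - 2) * 'C(d2 - 2, s - 2) * 'C(d3 - 1, s - 1) * 'C(d4 - 1, s - 1))%:R^-1 *
    (\sum_(S1 : {set 'I_d1} | #|S1| == s)
     \sum_(S2 : {set 'I_d2} | #|S2| == s)
     \sum_(S3 : {set 'I_d3} | #|S3| == s)
     \sum_(S4 : {set 'I_d4} | #|S4| == s)
        conc4 (substate S1 S2 S3 S4 a) ^+ 2)
  <= conc4 a ^+ 2.
Proof.
move=> h1 h12 h23 h34 hs hs1 _.
under eq_bigr => S1 _ do under eq_bigr => S2 _ do under eq_bigr => S3 _ do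
  under eq_bigr => S4 _ do rewrite conc_sub_pt.
rewrite xch4.
under eq_bigr do rewrite xch4.
under eq_bigr do under eq_bigr do rewrite xch4.
under eq_bigr do under eq_bigr do under eq_bigr do rewrite prod4 -!natr_sum.
have hp : forall b : bool, (b.+1 <= s)%N by case; lia.
under eq_bigr do under eq_bigr do under eq_bigr do rewrite !pair_count ?hp // -!mulrA -!natrM.
set M := ('C(d1 - 2, s - 2) * 'C(d2 - 2, s - 2) * 'C(d3 - 1, s - 1) * 'C(d4 - 1, s - 1))%N.
have M0 : (0 < M)%N.
  rewrite /M !muln_gt0 !bin_gt0; repeat (apply/andP; split); lia.
have MC : (M%:R : C) != 0 by rewrite pnatr_eq0 -lt0n.
rewrite conc4_sq !mulr_sumr.
apply: ler_sum => al _; rewrite !mulr_sumr; apply: ler_sum => p _; rewrite !mulr_sumr; apply: ler_sum => q _.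
rewrite [`|_| * (`|_| * _)]mulrA -expr2 -/(T4 al a p q).
have T0 : 0 <= T4 al a p q by rewrite /T4 exprn_ge0.
case: (eqVneq (T4 al a p q) 0) => [->|hT]; first by rewrite !(mul0r, mulr0).
have hN := Nbound hs hs1 h12 h23 h34 (T4_nz hT).
have -> : 8^-1 * T4 al a p q = M%:R^-1 * (8^-1 * (T4 al a p q * M%:R)) by field.
rewrite ler_wpM2l ?invr_ge0 ?ler0n // ler_wpM2l ?invr_ge0 ?ler0n //.
apply: ler_wpM2l => //; rewrite ler_nat !mulnA; exact: hN.
Qed.
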